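(* Let $(X,\mu)$ be a probability space. If $\mu$ is nontrivial (there exist measurable sets of measure strictly between $0$ and $1$), then for any $\mu$-preserving transformation $T$ of $X$ there exists a sequence $\{A_n\}$ of measurable subsets of $X$ with $\sum_n\mu(A_n)=\infty$ which is not Borel-Cantelli. Furthermore, if $\mu$ is non-atomic, then for any $\mu$-preserving transformation $T$ there exists a sequence $\{A_n\}$ of measurable subsets with $\sum_n\mu(A_n)=\infty$ such that for $\mu$-a.e. $x\in X$ there are at most finitely many $n$ with $T^nx\in A_n$.
   Context: A sequence of measurable sets $A_n$ with $\sum\mu(A_n)=\infty$ is Borel-Cantelli if for $\mu$-a.e. $x$ there are infinitely many $n$ with $T^nx\in A_n$. *)

(* Defs.v *)
From HB Require Import structures.
From mathcomp Require Import all_boot all_order all_algebra.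
From mathcomp Require Import all_classical all_reals all_analysis.
Set Implicit Arguments. Unset Strict Implicit. Unset Printing Implicit Defensive.
Import Order.TTheory GRing.Theory Num.Theory.
Local Open Scope classical_set_scope.
Local Open Scope ring_scope.

Definition measure_preserving d (X : measurableType d) (R : realType)
  (mu : set X -> \bar R) (T : X -> X) : Prop :=
  measurable_fun setT T /\
  forall A : set X, measurable A -> mu (T @^-1` A) = mu A.

Definition nontrivial_prob d (X : measurableType d) (R : realType)
  (mu : set X -> \bar R) : Prop :=
  exists A : set X, measurable A /\ (0 < mu A)%E /\ (mu A < 1)%E.

Definition nonatomic d (X : measurableType d) (R : realType)
  (mu : set X -> \bar R) : Prop :=
  forall A : set X, measurable A -> (0 < mu A)%E ->
    exists B : set X, [/\ measurable B, B `<=` A, (0 < mu B)%E & (mu B < mu A)%E].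

Definition borel_cantelli d (X : measurableType d) (R : realType)
  (mu : {measure set X -> \bar R}) (T : X -> X) (A : nat -> set X) : Prop :=
  {ae mu, forall x, forall N : nat, exists2 n : nat, (N <= n)%N & A n (iter n T x)}.

(* Main.v *)
From HB Require Import structures.
From mathcomp Require Import all_boot all_order all_algebra.
From mathcomp Require Import all_classical all_reals all_analysis.
Import Order.TTheory GRing.Theory Num.Theory.
Local Open Scope classical_set_scope.
Local Open Scope ring_scope.

From mathcomp Require Import lra zify.
Require Import Defs.

Lemma iter_mfun d (X : measurableType d) (T : X -> X) :
  measurable_fun setT T -> forall n, measurable_fun setT (iter n T).
Proof.
move=> mT; elim=> [|n IH] /=; first exact: measurable_id.
exact: measurableT_comp.
Qed.

Lemma pre_meas d (X : measurableType d) (T : X -> X) n (S : set X) :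
  measurable_fun setT T -> measurable S -> measurable (iter n T @^-1` S).
Proof.
move=> mT mS; have := @iter_mfun _ _ _ mT n measurableT _ mS; by rewrite setTI.
Qed.

Lemma pre_mu d (X : measurableType d) (R : realType) (mu : probability X R)
  (T : X -> X) : measure_preserving mu T ->
  forall n (S : set X), measurable S -> mu (iter n T @^-1` S) = mu S.
Proof.
move=> [mT pT]; elim=> [|n IH] S mS /=; first by [].
have -> : iter n.+1 T @^-1` S = iter n T @^-1` (T @^-1` S) by [].
by rewrite IH ?pT //; have := mT measurableT S mS; rewrite setTI.
Qed.

Lemma mu_fin d (X : measurableType d) (R : realType) (mu : probability X R)
  (S : set X) : measurable S ->
  exists r : R, [/\ mu S = r%:E, 0 <= r & r <= 1].
Proof.
move=> mS; have h0 := measure_ge0 mu S; have h1 := probability_le1 mu mS.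
have hf : mu S \is a fin_num by rewrite ge0_fin_numE // (le_lt_trans h1) ?ltry.
exists (fine (mu S)); rewrite fineK //; split => //.
  by rewrite -lee_fin fineK.
by rewrite -lee_fin fineK.
Qed.

Lemma ae_contra d (X : measurableType d) (R : realType) (mu : probability X R)
  (P Q : X -> Prop) : {ae mu, forall x, P x} -> {ae mu, forall x, Q x} ->
  (forall x, P x -> Q x -> False) -> False.
Proof.
move=> hP hQ hPQ. rewrite /almost_everywhere in hP hQ.
have hN : mu.-negligible [set: X].
  apply: (negligibleS _ (negligibleU hP hQ)) => x _ /=.
  by case: (pselect (P x)) => px; [right => qx; exact: hPQ px qx|left].
move/(negligibleP _ measurableT): hN => hN.
have := probability_setT mu; rewrite hN => /eqP; by rewrite eq_sym eqe oner_eq0.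
Qed.

Lemma archi_nat (R : realType) (b : R) (K : nat) : 0 < b ->
  exists j : nat, K%:R <= j%:R * b.
Proof.
move=> b0; exists (Num.trunc (K%:R / b)).+1.
rewrite -ler_pdivrMr //; apply/ltW; exact: truncnS_gt.
Qed.

Lemma series_unbounded (R : realType) (u : nat -> \bar R) :
  (forall n, (0 <= u n)%E) ->
  (forall K : nat, exists M, (K%:R%:E <= \sum_(0 <= n < M) u n)%E) ->
  (\sum_(0 <= n <oo) u n = +oo)%E.
Proof.
move=> u0 hK; set S := (\sum_(0 <= n <oo) u n)%E.
have hS : forall K : nat, (K%:R%:E <= S)%E.
  move=> K; have [M hM] := hK K; apply: le_trans hM _; exact: nneseries_lim_ge.
have S0 : (0 <= S)%E by have := hS 0%N.
case: S hS S0 => [r| |] hS S0 //.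
have := hS (Num.trunc r).+1; rewrite lee_fin leNgt => /negP; case.
exact: truncnS_gt.
Qed.

Lemma halve d (X : measurableType d) (R : realType) (mu : probability X R)
  (B : set X) (c : R) : nonatomic mu -> measurable B ->
  (0 < mu B)%E -> (mu B <= c%:E)%E ->
  exists B', [/\ measurable B', (0 < mu B')%E & (mu B' <= (c / 2)%:E)%E].
Proof.
move=> na mB B0 Bc; have [C [mC CB C0 CBl]] := na B mB B0.
have mD : measurable (B `\` C) by exact: measurableD.
have eB : mu B = (mu (B `\` C) + mu C)%E.
  by rewrite {1}(measureDI mu mB mC) (setIidr CB).
have [b [eb _ _]] := @mu_fin _ _ _ mu _ mB; have [c' [ec _ _]] := @mu_fin _ _ _ mu _ mC.
have [r [er _ _]] := @mu_fin _ _ _ mu _ mD.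
move: eB B0 Bc C0 CBl. rewrite eb ec er -EFinD => /eqP; rewrite eqe => /eqP eB.
rewrite !lte_fin lee_fin => B0 Bc C0 CBl.
have [h|h] := leP c' (c / 2).
  by exists C; rewrite ec lte_fin lee_fin.
by exists (B `\` C); rewrite er lte_fin lee_fin; split => //; lra.
Qed.

Lemma small_sets d (X : measurableType d) (R : realType) (mu : probability X R) :
  nonatomic mu -> forall k : nat, exists B, [/\ measurable B, (0 < mu B)%E &
    (mu B <= (1 / (2 ^ (k + 1))%:R)%:E)%E].
Proof.
move=> na; elim=> [|k [B [mB B0 Bk]]].
  have := @halve _ _ _ mu setT 1 na measurableT.
  rewrite probability_setT => /(_ ltr01 (lexx _)) [B [mB B0 Bk]].
  by exists B; split => //; rewrite expn1 mul1r.
have [B' [mB' B0' Bk']] := @halve _ _ _ mu _ _ na mB B0 Bk.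
exists B'; split => //; apply: (le_trans Bk'); rewrite lee_fin.
by rewrite addSn expnS natrM !mul1r invfM mulrC.
Qed.

Lemma series_io (R : realType) (u : nat -> \bar R) (c : R) :
  (forall n, (0 <= u n)%E) -> 0 < c ->
  (forall N, exists n, (N <= n)%N /\ (c%:E <= u n)%E) ->
  (\sum_(0 <= n <oo) u n = +oo)%E.
Proof.
move=> u0 c0 hio.
have hJ : forall J : nat, exists M, ((J%:R * c)%:E <= \sum_(0 <= n < M) u n)%E.
  elim=> [|J [M hM]]; first by exists 0%N; rewrite big_geq // mul0r.
  have [n [hn hc]] := hio M; exists n.+1.
  rewrite (@big_cat_nat _ _ _ M _ _ _ _ (leq0n M) (leq_trans hn (leqnSn n))) /=.
  rewrite big_nat_recr /=; last exact: hn.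
  rewrite -natr1 mulrDl mul1r EFinD; apply: leeD => //.
  apply: (le_trans hc); apply: lee_paddl => //.
  by apply: sume_ge0 => *; exact: u0.
apply: (@series_unbounded R u u0) => K.
have [j hj] := @archi_nat R _ K c0; have [M hM] := hJ j.
by exists M; apply: le_trans hM; rewrite lee_fin.
Qed.

Lemma muC d (X : measurableType d) (R : realType) (mu : probability X R)
  (A : set X) (a : R) : measurable A -> mu A = a%:E -> mu (~` A) = (1 - a)%:E.
Proof.
move=> mA ea.
have h : mu setT = (mu (~` A) + mu A)%E.
  by rewrite {1}(measureDI mu measurableT mA) setTD setTI.
have [r [er _ _]] := @mu_fin _ _ _ mu (~` A) (measurableC mA).
have := probability_setT mu; rewrite h ea => e.
have e2 : (r%:E + a%:E = 1)%E by rewrite -er; exact: e.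
move: e2; rewrite -EFinD => /eqP; rewrite eqe => /eqP e3.
apply: (etrans er); congr (_%:E); lra.
Qed.

Fixpoint sfun (g : nat -> nat) (k : nat) : nat :=
  if k is k'.+1 then (sfun g k' + (g k').+1)%N else 0%N.

Lemma sfun_mono g i j : (i <= j)%N -> (sfun g i <= sfun g j)%N.
Proof.
elim: j => [|j IH]; first by rewrite leqn0 => /eqP ->.
rewrite leq_eqVlt => /orP[/eqP -> //|]; rewrite ltnS => /IH h.
by apply: (leq_trans h); rewrite /= leq_addr.
Qed.

Lemma part2 d (X : measurableType d) (R : realType) (mu : probability X R) :
  nonatomic mu ->
    forall T : X -> X, measure_preserving mu T ->
    exists A : nat -> set X,
      [/\ (forall n, measurable (A n)),
          (\sum_(0 <= n <oo) mu (A n) = +oo)%E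
        & {ae mu, forall x, exists N : nat,
             forall n : nat, (N <= n)%N -> ~ A n (iter n T x)}].
Proof.
move=> na T mp; have mT := mp.1.
have [B hB] := choice (@small_sets _ _ _ mu na).
have mB k : measurable (B k) by case: (hB k).
have [b hb] : exists b : nat -> R, forall k, mu (B k) = (b k)%:E /\ 0 < b k.
  exists (fun k => fine (mu (B k))) => k.
  have [r [er _ _]] := @mu_fin _ _ _ mu _ (mB k).
  case: (hB k) => _ B0 _; rewrite er /=; split => //.
  by move: B0; rewrite er lte_fin.
have [g hg] := choice (fun k => @archi_nat R _ k (hb k).2).
pose s := sfun g.
pose A n := \bigcup_k (if (s k <= n < s k.+1)%N
                       then iter (s k.+1 - 1 - n) T @^-1` B k else set0).
have mA n : measurable (A n).
  apply: bigcupT_measurable => k; case: ifP => _; last exact: measurable0.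
  exact: pre_meas.
exists A; split => //.
  apply: series_unbounded => [n|K]; first exact: measure_ge0.
  exists (s K.+1); have hs := @lee_sum_nneg_natl R (fun n => mu (A n)) xpredT (s K.+1)
    (fun _ _ _ => measure_ge0 _ _) 0 (s K) (leq0n _).
  apply: (le_trans _ hs).
  apply: (@le_trans _ _ (\sum_(s K <= n < s K.+1) (b K)%:E)%E).
    rewrite sumr_const_nat /s /= addKn.
    have -> : ((b K)%:E *+ (g K).+1)%R = ((b K *+ (g K).+1)%:E) :> \bar R.
      by elim: (g K).+1 => [//|n IH]; rewrite !mulrS EFinD IH.
    rewrite lee_fin (_ : b K *+ (g K).+1 = (g K).+1%:R * b K); last first.
      by rewrite mulr_natl.
    apply: le_trans (hg K) _; apply: ler_wpM2r; first exact: ltW (hb K).2.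
    by rewrite ler_nat.
  rewrite big_nat_cond [X in (_ <= X)%E]big_nat_cond.
  apply: lee_sum => n /andP[hn _].
  rewrite -(hb K).1 -(@pre_mu _ _ _ mu T mp (s K.+1 - 1 - n) (B K) (mB K)).
  apply: le_measure; rewrite ?inE; [exact: pre_meas|exact: mA|].
  by move=> x hx; exists K => //; rewrite hn.
pose E k := iter (s k.+1 - 1) T @^-1` B k.
have mE k : measurable (E k) by exact: pre_meas.
have mL : measurable (lim_sup_set E).
  apply: bigcapT_measurable => n; apply: bigcup_measurable => k _; exact: mE.
have L0 : mu (lim_sup_set E) = 0.
  apply: lim_sup_set_cvg0 => //.
  apply: (@le_lt_trans _ _ (\sum_(0 <= k <oo) (1 / (2 ^ (k + 1))%:R)%:E)%E).
    apply: lee_nneseries => [k _ _|k _]; first exact: measure_ge0.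
    case: (hB k) => _ _ hk; apply: le_trans hk.
    by rewrite le_eqVlt; apply/orP; left; apply/eqP; exact: pre_mu.
  have := cvg_lim _ (@cvg_geometric_eseries_half R 1 0).
  by rewrite /eseries => ->; [exact: ltry|].
exists (lim_sup_set E); split => // x /= hx N _.
apply: contrapT => hN; apply: hx; exists (s N) => n hn hA.
case: hA => k _; case: ifP => [/andP[h1 h2]|_ //] hk.
apply: hN; exists k.
  rewrite /= leqNgt; apply/negP => kN.
  have := sfun_mono g _ _ kN; rewrite -/s => h3; lia.
rewrite /E /=; move: hk; rewrite /= -iterD subnK //; lia.
Qed.

Lemma recur d (X : measurableType d) (R : realType) (mu : probability X R)
  (T : X -> X) (A : set X) : measure_preserving mu T -> measurable A ->
  (0 < mu A)%E ->
  exists m, (0 < m)%N /\ (0 < mu (A `&` iter m T @^-1` A))%E.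
Proof.
move=> mp mA A0; have mT := mp.1.
apply: contrapT => hN.
have hN' m : mu (A `&` iter m.+1 T @^-1` A) = 0.
  apply/eqP; rewrite eq_le measure_ge0 andbT leNgt; apply/negP => h.
  by apply: hN; exists m.+1.
pose W := A `&` \bigcap_j ~` (iter j.+1 T @^-1` A).
have mW : measurable W.
  apply: measurableI => //; apply: bigcapT_measurable => j.
  by apply: measurableC; exact: pre_meas.
have W0 : (0 < mu W)%E.
  have nD : mu.-negligible (A `\` W).
    apply: (negligibleS _ (negligible_bigcup (F := fun j => A `&` iter j.+1 T @^-1` A) _)).
      move=> x [Ax nWx]; apply: contrapT => hx; apply: nWx; split => // j _ hj.
      by apply: hx; exists j.
    move=> j; apply/negligibleP; last exact: hN'.
    by apply: measurableI => //; exact: pre_meas.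
  have mAW : measurable (A `\` W) by exact: measurableD.
  have e : mu A = (mu (A `\` W) + mu (A `&` W))%E by exact: measureDI.
  have e0 : mu (A `\` W) = 0 by exact/negligibleP.
  rewrite e0 add0e in e; apply: (lt_le_trans A0); rewrite e.
  by apply: le_measure; rewrite ?inE //; apply: measurableI.
pose F i := iter i T @^-1` W.
have mF i : measurable (F i) by exact: pre_meas.
have tF : trivIset setT F.
  have key i j : (i < j)%N -> forall x, F i x -> F j x -> False.
    move=> ij x Fi Fj; move: Fi Fj; rewrite /F /=.
    have -> : j = ((j - i).-1.+1 + i)%N by lia.
    rewrite iterD => -[_ hW] [hA _]; exact: (hW (j - i).-1 I hA).
  move=> i j _ _ [x [Fi Fj]]; case: (ltngtP i j) => // ij.
    by case: (key _ _ ij x Fi Fj).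
  by case: (key _ _ ij x Fj Fi).
have mU : measurable (\bigcup_n F n) by exact: bigcupT_measurable.
have hU := measure_semi_bigcup mu mF tF mU.
have [w [ew _ _]] := @mu_fin _ _ _ mu _ mW.
have w0 : 0 < w by move: W0; rewrite ew lte_fin.
have : (\sum_(0 <= i <oo) mu (F i) = +oo)%E.
  apply: (@series_io R _ w) => [n|//|N]; first exact: measure_ge0.
  exists N; split => //; rewrite -ew le_eqVlt; apply/orP; left; apply/eqP.
  by apply/esym; exact: pre_mu.
rewrite -hU => hinf.
have := probability_le1 mu mU; rewrite hinf.
by rewrite leNgt ltry.
Qed.

Lemma part1_atom d (X : measurableType d) (R : realType) (mu : probability X R) :
  nontrivial_prob mu -> ~ nonatomic mu ->
  forall T : X -> X, measure_preserving mu T ->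
    exists A : nat -> set X,
      [/\ (forall n, measurable (A n)),
          (\sum_(0 <= n <oo) mu (A n) = +oo)%E
        & ~ borel_cantelli mu T A].
Proof.
move=> [S [mS [S0 S1]]] nna T mp; have mT := mp.1.
have [A0 [mA0 A00 hat]] : exists A0, [/\ measurable A0, (0 < mu A0)%E &
    forall B, measurable B -> B `<=` A0 -> (0 < mu B)%E -> (mu A0 <= mu B)%E].
  apply: contrapT => h; apply: nna => A mA Apos; apply: contrapT => hB; apply: h.
  exists A; split => // B mB BA B0; rewrite leNgt; apply/negP => lt; apply: hB.
  by exists B; split.
have [a [ea a0' a1]] := @mu_fin _ _ _ mu A0 mA0.
have a0 : 0 < a by move: A00; rewrite ea lte_fin.
have a_lt1 : a < 1.
  rewrite lt_neqAle a1 andbT; apply/negP => /eqP a_eq1.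
  have hS : mu S = (mu (S `\` A0) + mu (S `&` A0))%E by exact: measureDI.
  have hC : mu (S `\` A0) = 0.
    apply/eqP; rewrite eq_le measure_ge0 andbT.
    have mC : measurable (~` A0) by exact: measurableC.
    have -> : 0%E = mu (~` A0) by rewrite (@muC _ _ _ mu _ _ mA0 ea) a_eq1 subrr.
    by apply: le_measure; rewrite ?inE //; first [exact: measurableD | move=> x []].
  rewrite hC add0e in hS.
  case: (leP (mu (S `&` A0)) 0%E) => h.
    by move: S0; rewrite hS ltNge h.
  have := hat _ (measurableI _ _ mS mA0) (@subIsetr _ _ _) h.
  by rewrite -hS ea a_eq1 leNgt S1.
have [m [m0 hm]] := @recur _ _ _ mu T A0 mp mA0 A00.
pose P j := iter j T @^-1` A0.
have mP j : measurable (P j) by exact: pre_meas.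
have hZm : mu (P m `\` A0) = 0.
  have mPD : measurable (P m `\` A0) by exact: measurableD.
  have mPI : measurable (P m `&` A0) by exact: measurableI.
  have e : mu (P m) = (mu (P m `\` A0) + mu (P m `&` A0))%E by exact: measureDI.
  have e1 : mu (P m) = a%:E by rewrite -ea; exact: pre_mu.
  have h2 : (a%:E <= mu (P m `&` A0))%E.
    rewrite -ea; apply: hat; [exact: mPI | exact: subIsetr | rewrite setIC; exact: hm].
  have [r [er r0 _]] := @mu_fin _ _ _ mu (P m `\` A0) mPD.
  have [c [ec _ _]] := @mu_fin _ _ _ mu (P m `&` A0) mPI.
  rewrite e1 er ec -EFinD in e; rewrite ec lee_fin in h2.
  move/eqP: e; rewrite eqe => /eqP e.
  by rewrite er; congr (_%:E); lra.
have Z0 k : mu (P (k * m)%N `\` A0) = 0.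
  elim: k => [|k IH].
    have -> : P (0 * m)%N `\` A0 = set0.
      by apply/seteqP; split => x // [].
    exact: measure0.
  apply/negligibleP; first exact: measurableD.
  apply: (negligibleS _ (negligibleU (A := P m `\` A0)
            (B := iter m T @^-1` (P (k * m)%N `\` A0)) _ _)).
  - move=> x [hx nA]; move: hx; rewrite /P /= mulSnr iterD => hx.
    case: (pselect (A0 (iter m T x))) => h; [left | right]; split => //.
  - by apply/negligibleP => //; exact: measurableD.
  - apply/negligibleP; first by apply: pre_meas => //; exact: measurableD.
    rewrite -IH; apply: pre_mu => //; exact: measurableD.
pose An n := if (m %| n)%N then A0 else set0.
have mAn n : measurable (An n) by rewrite /An; case: ifP.
exists An; split => //.
  apply: (@series_io R _ a) => [n|//|N]; first exact: measure_ge0.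
  exists (N * m)%N; split; first by rewrite leq_pmulr.
  rewrite /An (_ : (m %| N * m)%N = true) ?dvdn_mull // -ea.
  exact: lexx.
move=> hBC.
have nZ : mu.-negligible (\bigcup_k (P (k * m)%N `\` A0)).
  apply: negligible_bigcup => k; apply/negligibleP; last exact: Z0.
  exact: measurableD.
have nC : mu.-negligible (~` A0).
  apply: (negligibleS _ (negligibleU hBC nZ)) => x nAx.
  case: (pselect (forall N, exists2 n, (N <= n)%N & An n (iter n T x))) => hQ;
    [right|by left].
  have [n _ hn] := hQ 0%N; move: hn; rewrite /An; case: ifP => // /dvdnP [k ->] hk.
  by exists k.
have h1 : mu (~` A0) = 0.
  by apply/negligibleP => //; exact: measurableC.
have h2 := @muC _ _ _ mu _ _ mA0 ea; rewrite h1 in h2.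
by move/eqP: h2; rewrite eq_sym eqe subr_eq0 => /eqP h3; move: a_lt1; rewrite h3 ltxx.
Qed.

Theorem proposition1p6 (d : measure_display) (X : measurableType d)
  (R : realType) (mu : probability X R) :
  (nontrivial_prob mu ->
    forall T : X -> X, measure_preserving mu T ->
    exists A : nat -> set X,
      [/\ (forall n, measurable (A n)),
          (\sum_(0 <= n <oo) mu (A n) = +oo)%E
        & ~ borel_cantelli mu T A]) /\
  (nonatomic mu ->
    forall T : X -> X, measure_preserving mu T ->
    exists A : nat -> set X,
      [/\ (forall n, measurable (A n)),
          (\sum_(0 <= n <oo) mu (A n) = +oo)%E
        & {ae mu, forall x, exists N : nat,
             forall n : nat, (N <= n)%N -> ~ A n (iter n T x)}]).
Proof.
split.
  move=> nt T mp; case: (pselect (nonatomic mu)) => na; last exact: part1_atom.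
  have [A [mA sA hA]] := @part2 _ _ _ mu na T mp.
  exists A; split => // hBC.
  apply: (@ae_contra _ _ _ mu _ _ hBC hA) => x hQ [N hN].
  have [n hn hAn] := hQ N; exact: hN n hn hAn.
move=> na T mp; exact: part2.
Qed.
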